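(* Let $1\le s<n$ and $A\in M_{s+1,n-s}$ (so $A$ has more than one row), and let $A'\in M_{s,n-s}$ be obtained from $A$ by removing one of its rows. Then $\omega_j(A')\ge\omega_j(A)$ for all $j=1,\dots,n-s$. If moreover the removed row is a rational linear combination of the remaining rows, then $\omega_j(A')=\omega_j(A)$ for all $j=1,\dots,n-s$.
   Context: Higher order exponents of a matrix $M\in M_{m,\ell}$: set $\sigma=m-1$, $N=m+\ell-1$, let $V=\mathbb R^{N+1}$ with basis $e_0,\dots,e_N$, $V_0=\mathrm{span}(e_1,\dots,e_N)$, $V_\bullet=\mathrm{span}(e_{\sigma+1},\dots,e_N)$; $e_I=e_{i_1}\wedge\dots\wedge e_{i_j}$; $\bigwedge(V)$ carries the inner product making $\{e_I\}$ orthonormal. $\mathcal S_{N+1,j}$ is the set of $w=v_1\wedge\dots\wedge v_j$ with $v_1,\dots,v_j\in\mathbb Z^{N+1}$ linearly independent; $\pi_\bullet$ is the orthogonal projection $\bigwedge^jV\to\bigwedge^jV_\bullet$. Index rows of $M$ by $0,\dots,\sigma$ and columns by $\sigma+1,\dots,N$, let $a_i=\sum_{k=\sigma+1}^N m_{i,k}e_k$, and let $R_Mc(w)\in(\bigwedge^{j-1}V_0)^{\sigma+1}$ have $i$-th component $\sum_{J\subset\{1,\dots,N\},\#J=j-1}\langle(e_i+a_i)\wedge e_J,w\rangle e_J$ (Euclidean norm). For $1\le j\le\ell$, $\omega_j(M)$ is the supremum of $v$ such that there exist $w\in\mathcal S_{N+1,j}$ with arbitrarily large $\|\pi_\bullet(w)\|$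 satisfying $\|R_Mc(w)\|<\|\pi_\bullet(w)\|^{-\frac{v+1-j}{j}}$. (Thus $\omega_j(A)$ uses $N=n$, and $\omega_j(A')$ uses $N=n-1$.) *)

(* Defs.v *)
From mathcomp Require Import all_boot all_order all_algebra.
From mathcomp Require Import all_classical all_reals all_analysis.
Import Order.TTheory GRing.Theory Num.Theory.
Set Implicit Arguments. Unset Strict Implicit. Unset Printing Implicit Defensive.
Local Open Scope ring_scope.

Section HigherExponents.
Variable R : realType.

Definition dotv (p : nat) (u v : 'I_p -> R) : R := \sum_(k < p) u k * v k.

Definition evec (p : nat) (k : 'I_p) : 'I_p -> R := fun l => (l == k)%:R.

(* inner product <u_1 /\ ... /\ u_j, v_1 /\ ... /\ v_j> on /\^j R^p
   (the one making the e_I orthonormal) *)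
Definition wpair (j p : nat) (u v : 'I_j -> 'I_p -> R) : R :=
  \det (\matrix_(a < j, b < j) dotv (u a) (v b)).

(* strictly increasing index maps, encoding subsets I with #I = j *)
Definition incr (a b : nat) (f : 'I_a -> 'I_b) : bool :=
  [forall x : 'I_a, forall y : 'I_a, (x < y)%N ==> (f x < f y)%N].

Definition rvecs (j p : nat) (w : 'M[int]_(j, p)) : 'I_j -> 'I_p -> R :=
  fun a b => (w a b)%:~R.

(* e_i + a_i in V = R^(m+l) (N = m+l-1, sigma = m-1);
   coordinates 0..sigma are the rows, sigma+1..N the columns of M *)
Definition xvec (m l : nat) (M : 'M[R]_(m, l)) (i : 'I_m) : 'I_(m + l) -> R :=
  fun k => match fintype.split k with inl r => (r == i)%:R | inr c => M i c end.

(* || pi_bullet(w) ||, w = w_1 /\ ... /\ w_j, j = k.+1 *)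
Definition pi_norm (m l k : nat) (w : 'M[int]_(k.+1, m + l)) : R :=
  Num.sqrt (\sum_(f : {ffun 'I_k.+1 -> 'I_(m + l)} |
                  incr f && [forall a, (m <= f a)%N])
              (wpair (fun a => evec (f a)) (rvecs w)) ^+ 2).

Definition xJ (m l k : nat) (M : 'M[R]_(m, l)) (i : 'I_m)
  (g : 'I_k -> 'I_(m + l)) : 'I_k.+1 -> 'I_(m + l) -> R :=
  fun a => if unlift ord0 a is Some c then evec (g c) else xvec M i.

(* || R_M c(w) ||, J ranging over (j-1)-subsets of {1..N} *)
Definition Rc_norm (m l k : nat) (M : 'M[R]_(m, l)) (w : 'M[int]_(k.+1, m + l)) : R :=
  Num.sqrt (\sum_(i < m)
     \sum_(g : {ffun 'I_k -> 'I_(m + l)} | incr g && [forall c, (0 < g c)%N])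
        (wpair (xJ M i g) (rvecs w)) ^+ 2).

Definition omega_adm (m l k : nat) (M : 'M[R]_(m, l)) (v : R) : Prop :=
  forall H : R, exists w : 'M[int]_(k.+1, m + l),
    [/\ row_free (map_mx (fun z : int => (z%:~R : R)) w),
        H < pi_norm w &
        Rc_norm M w < pi_norm w `^ (- ((v + 1 - k.+1%:R) / k.+1%:R))].

(* omega_j(M), for 1 <= j (we use k = j.-1, so j = k.+1) *)
Definition omega (m l : nat) (M : 'M[R]_(m, l)) (j : nat) : \bar R :=
  ereal_sup [set (v%:E) | v in [set v : R | omega_adm j.-1 M v]].

End HigherExponents.

(* Main.v *)
Set Warnings "-notation-overridden,-ambiguous-paths,-notation-incompatible-prefix".
Require Import Defs.
From mathcomp Require Import all_boot all_order all_algebra.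
From mathcomp Require Import all_classical all_reals all_analysis.
From mathcomp Require Import perm.
From mathcomp Require Import lra zify ring.
Import Order.TTheory GRing.Theory Num.Theory.
Set Implicit Arguments. Unset Strict Implicit. Unset Printing Implicit Defensive.
Local Open Scope ring_scope.


Section Gen.
Variable R : realType.

Lemma wpair_ext j p (u u' : 'I_j -> 'I_p -> R) W :
  (forall a x, u a x = u' a x) -> wpair u W = wpair u' W.
Proof.
move=> e; rewrite /wpair; congr (\det _); apply/matrixP => a b; rewrite !mxE /dotv.
by apply: eq_bigr => x _; rewrite e.
Qed.

Lemma dotv_evec p (x : 'I_p) (v : 'I_p -> R) : dotv (evec R x) v = v x.
Proof.
rewrite /dotv (bigD1 x) //= /evec eqxx mul1r big1 ?addr0 // => k /negbTE ->.
by rewrite mul0r.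
Qed.

Lemma wpair_perm j p (u : 'I_j -> 'I_p -> R) W (s : 'S_j) :
  `|wpair (fun a => u (s a)) W| = `|wpair u W|.
Proof.
rewrite /wpair.
have -> : (\matrix_(a, b) dotv (u (s a)) (W b)) =
   row_perm s (\matrix_(a, b) dotv (u a) (W b)).
  by apply/matrixP => a b; rewrite !mxE.
rewrite row_permE det_mulmx det_perm normrM.
by case: (odd_perm s); rewrite ?expr1 ?expr0 ?normrN normr1 mul1r.
Qed.

Lemma wpair_alt j p (u : 'I_j -> 'I_p -> R) W (a1 a2 : 'I_j) :
  a1 != a2 -> (forall x, u a1 x = u a2 x) -> wpair u W = 0.
Proof.
move=> ne e; rewrite /wpair; apply: (determinant_alternate ne) => b.
by rewrite !mxE /dotv; apply: eq_bigr => x _; rewrite e.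
Qed.

Definition upd j p (u : 'I_j -> 'I_p -> R) (a : 'I_j) (x : 'I_p -> R) :=
  fun b => if b == a then x else u b.

Lemma wpair_upd2 j p (u : 'I_j -> 'I_p -> R) W a (b c : R) x y :
  wpair (upd u a (fun z => b * x z + c * y z)) W =
  b * wpair (upd u a x) W + c * wpair (upd u a y) W.
Proof.
rewrite /wpair; apply: (@determinant_multilinear _ _ _ _ _ a).
- apply/rowP => t; rewrite !mxE /upd eqxx /dotv.
  rewrite !mulr_sumr -big_split /=; apply: eq_bigr => z _; lra.
- by apply/matrixP => i t; rewrite !mxE /upd eq_sym (negbTE (neq_lift a i)).
- by apply/matrixP => i t; rewrite !mxE /upd eq_sym (negbTE (neq_lift a i)).
Qed.

Lemma wpair_upd_lin j p (u : 'I_j -> 'I_p -> R) W a (beta : R) v0 K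
   (alpha : 'I_K -> R) v :
  wpair (upd u a (fun z => beta * v0 z + \sum_(t < K) alpha t * v t z)) W =
  beta * wpair (upd u a v0) W + \sum_(t < K) alpha t * wpair (upd u a (v t)) W.
Proof.
elim: K alpha v => [|K IH] alpha v.
  rewrite big_ord0 addr0.
  rewrite (@wpair_ext _ _ _ (upd u a (fun z => beta * v0 z + 0 * v0 z))).
    by rewrite wpair_upd2 mul0r addr0.
  by move=> b z; rewrite /upd; case: eqP => // _; rewrite big_ord0 mul0r.
rewrite (@wpair_ext _ _ _ (upd u a (fun z => 1 * (beta * v0 z +
    \sum_(t < K) alpha (widen_ord (leqnSn K) t) * v (widen_ord (leqnSn K) t) z)
    + alpha ord_max * v ord_max z))).
  by rewrite wpair_upd2 IH mul1r big_ord_recr /= addrA.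
by move=> b z; rewrite /upd; case: eqP => // _; rewrite big_ord_recr /= mul1r addrA.
Qed.

Definition rep p (G : ('I_p -> R) -> Prop) (M : R) (x : 'I_p -> R) :=
  exists K beta v0 (alpha : 'I_K -> R) v,
    [/\ forall z, x z = beta * v0 z + \sum_(t < K) alpha t * v t z,
        G v0, forall t, G (v t) & `|beta| + \sum_(t < K) `|alpha t| <= M].

Lemma span_bound k p (W : 'I_k.+1 -> 'I_p -> R) (G : 'I_k.+1 -> ('I_p -> R) -> Prop)
   (B M : R) : 0 <= B ->
  (forall u, (forall a, G a (u a)) -> `|wpair u W| <= B) ->
  forall u, (forall a, rep (G a) M (u a)) -> `|wpair u W| <= B * M ^+ k.+1.
Proof.
move=> B0 base.
suff H : forall n, (n <= k.+1)%N -> forall u,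
    (forall a : 'I_k.+1, (a < n)%N -> rep (G a) M (u a)) ->
    (forall a : 'I_k.+1, (n <= a)%N -> G a (u a)) -> `|wpair u W| <= B * M ^+ n.
  move=> u Hu; apply: (H k.+1 (leqnn _)) => a; first by move=> _; apply: Hu.
  by rewrite leqNgt ltn_ord.
elim=> [|n IH] Hn u Hr Hg; first by rewrite expr0 mulr1; apply: base => a; apply: Hg.
pose a0 : 'I_k.+1 := Ordinal Hn.
case: (Hr a0 (ltnSn n)) => [K [beta [v0 [alpha [v [Ex G0 Gv Hm]]]]]].
have -> : wpair u W = wpair (upd u a0 (fun z => beta * v0 z +
            \sum_(t < K) alpha t * v t z)) W.
  by apply: wpair_ext => a z; rewrite /upd; case: eqP => [->|//]; rewrite Ex.
rewrite wpair_upd_lin.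
have IHy : forall y, G a0 y -> `|wpair (upd u a0 y) W| <= B * M ^+ n.
  move=> y Gy; apply: IH; first exact: ltnW.
    move=> a an; rewrite /upd; case: eqP => [e|_].
      by move: an; rewrite e /= ltnn.
    by apply: Hr; apply: ltnW.
  move=> a na; rewrite /upd; case: eqP => [->//|ne]; apply: Hg.
  rewrite ltn_neqAle na andbT; apply/eqP => e; apply: ne; exact: val_inj.
have M0 : 0 <= M.
  apply: le_trans Hm; apply: addr_ge0 => //; exact: sumr_ge0.
apply: (le_trans (ler_normD _ _)).
apply: (@le_trans _ _ (`|beta| * (B * M ^+ n) + \sum_(t < K) `|alpha t| * (B * M ^+ n))).
  apply: lerD; first by rewrite normrM; apply: ler_wpM2l => //; apply: IHy.
  apply: (le_trans (ler_norm_sum _ _ _)); apply: ler_sum => t _.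
  by rewrite normrM; apply: ler_wpM2l => //; apply: IHy.
rewrite -mulr_suml -mulrDl exprS mulrCA.
by apply: ler_wpM2l => //; apply: ler_wpM2r => //; apply: exprn_ge0.
Qed.


Lemma sort_perm k p (h : 'I_k -> 'I_p) : injective h ->
  exists s : 'S_k, incr (fun c => h (s c)).
Proof.
move=> hi.
set t := [tuple h c | c < k].
set st := sort (fun x y : 'I_p => (x <= y)%N) t.
have pst : perm_eq st t by rewrite /st perm_sort perm_refl.
case/tuple_permP: pst => s Hs; exists s.
have ut : uniq t by rewrite /t /= map_inj_uniq ?enum_uniq // ?ord_enum_uniq.
have us : uniq st by rewrite sort_uniq.
have ss : sorted (fun x y : 'I_p => (x <= y)%N) st.
  by apply: sort_sorted => x y; exact: leq_total.
have sl : sorted ltn (map val st).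
  by rewrite ltn_sorted_uniq_leq map_inj_uniq // us sorted_map.
have szst : size st = k by rewrite size_sort size_tuple.
have hst : forall x : 'I_k, val (h (s x)) = nth 0%N (map val st) x.
  move=> x; rewrite (nth_map (h (s x))) ?szst //.
  by rewrite Hs -(tnth_nth (h (s x)) [tuple tnth t (s i) | i < k] x) !tnth_mktuple.
apply/forallP => x; apply/forallP => y; apply/implyP => xy.
rewrite !hst; apply: (sorted_ltn_nth ltn_trans) => //;
  by rewrite inE size_map szst ltn_ord.
Qed.

Lemma xJ0 m l k (M : 'M[R]_(m, l)) i (g : 'I_k -> 'I_(m + l)) :
  xJ M i g ord0 = xvec M i.
Proof. by rewrite /xJ unlift_none. Qed.

Lemma xJS m l k (M : 'M[R]_(m, l)) i (g : 'I_k -> 'I_(m + l)) c :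
  xJ M i g (lift ord0 c) = evec R (g c).
Proof. by rewrite /xJ liftK. Qed.

Lemma wpair_noninj m l k (M : 'M[R]_(m, l)) i (h : 'I_k -> 'I_(m + l)) W :
  ~~ injectiveb h -> wpair (xJ M i h) W = 0.
Proof.
case/injectivePn => c1 [c2 ne e].
apply: (@wpair_alt _ _ _ _ (lift ord0 c1) (lift ord0 c2)).
  by rewrite (inj_eq (@lift_inj _ ord0)).
by move=> x; rewrite !xJS e.
Qed.

Lemma bound_pos m l k (M : 'M[R]_(m, l)) (w : 'M[int]_(k.+1, m + l)) (q : 'I_m)
   (h : 'I_k -> 'I_(m + l)) :
  (forall c, 0 < h c)%N -> `|wpair (xJ M q h) (rvecs R w)| <= Rc_norm M w.
Proof.
move=> hpos.
case: (boolP (injectiveb h)) => [/injectiveP hi | ni]; last first.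
  by rewrite wpair_noninj // normr0 sqrtr_ge0.
case: (sort_perm hi) => s hs.
pose g := [ffun c => h (s c)].
pose sh : 'S_k.+1 := lift_perm ord0 ord0 s.
rewrite -(wpair_perm _ _ sh) (@wpair_ext _ _ _ (xJ M q g)); last first.
  move=> a x; case: (unliftP ord0 a) => [c ->|->].
    by rewrite /sh lift_perm_lift !xJS ffunE.
  by rewrite /sh lift_perm_id !xJ0.
have Pg : incr g && [forall c, (0 < g c)%N].
  apply/andP; split.
    apply/forallP => x; apply/forallP => y; rewrite !ffunE.
    exact: (forallP (forallP hs x) y).
  by apply/forallP => c; rewrite ffunE hpos.
rewrite /Rc_norm -sqrtr_sqr; apply: ler_wsqrtr.
rewrite (bigD1 q) //= (bigD1 g) //= -addrA lerDl.
apply: addr_ge0; first by apply: sumr_ge0 => ? _; apply: sqr_ge0.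
by apply: sumr_ge0 => ? _; apply: sumr_ge0 => ? _; apply: sqr_ge0.
Qed.


Lemma ordE n (x y : 'I_n) : (x == y) = (nat_of_ord x == nat_of_ord y).
Proof. by []. Qed.

Lemma xvecE m l (M : 'M[R]_(m, l)) i z :
  xvec M i z = evec R (lshift l i) z + \sum_(c < l) M i c * evec R (rshift m c) z.
Proof.
rewrite /xvec /evec; case: splitP => [j ej | c ec].
  rewrite big1 ?addr0; last first.
    move=> c _; rewrite ordE ej /=.
    by rewrite eqn_leq andbC leqNgt (leq_trans (ltn_ord j) (leq_addr _ _)) mulr0.
  by rewrite [z == _]ordE ej.
rewrite ordE ec /= eqn_leq leqNgt ltn_addr ?ltn_ord // add0r.
rewrite (bigD1 c) //= ordE ec eqxx mulr1 big1 ?addr0 // => d dc.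
by rewrite ordE ec /= eqn_add2l -ordE eq_sym (negbTE dc) mulr0.
Qed.

Lemma lin_bound K (b X Bx By : R) (al Y : 'I_K -> R) :
  `|X| <= Bx -> (forall t, `|Y t| <= By) ->
  `|b * X + \sum_t al t * Y t| <= `|b| * Bx + (\sum_t `|al t|) * By.
Proof.
move=> hX hY; apply: (le_trans (ler_normD _ _)); apply: lerD.
  by rewrite normrM; apply: ler_wpM2l.
apply: (le_trans (ler_norm_sum _ _ _)); rewrite mulr_suml; apply: ler_sum => t _.
by rewrite normrM; apply: ler_wpM2l.
Qed.

Definition Cst m l (M : 'M[R]_(m, l)) : R := 1 + 2 * \sum_i \sum_c `|M i c|.

Lemma rowsum_le m l (M : 'M[R]_(m, l)) i :
  \sum_c `|M i c| <= \sum_i \sum_c `|M i c|.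
Proof.
rewrite (bigD1 i) //= lerDl; apply: sumr_ge0 => ? _; apply: sumr_ge0 => ? _.
exact: normr_ge0.
Qed.

Lemma bound_all m l k (M : 'M[R]_(m.+1, l)) (w : 'M[int]_(k.+1, m.+1 + l)) q
   (h : 'I_k -> 'I_(m.+1 + l)) :
  `|wpair (xJ M q h) (rvecs R w)| <= Cst M * Rc_norm M w.
Proof.
set Rc := Rc_norm M w; set W := rvecs R w.
have Rc0 : 0 <= Rc by apply: sqrtr_ge0.
have S0 : 0 <= \sum_i \sum_c `|M i c|.
  by apply: sumr_ge0 => ? _; apply: sumr_ge0 => ? _; exact: normr_ge0.
have C1 : 1 <= Cst M by rewrite /Cst; lra.
case: (boolP (injectiveb h)) => [/injectiveP hi | ni]; last first.
  by rewrite wpair_noninj // normr0 mulr_ge0 //; lra.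
case: (boolP [exists c, val (h c) == 0%N]) => [/existsP [c0 /eqP hc0] | /existsPn hn];
    last first.
  apply: (le_trans (@bound_pos _ _ _ M w q h _)); last by rewrite ler_peMl.
  by move=> c; rewrite lt0n; exact: hn c.
set z0 : 'I_(m.+1 + l) := lshift l ord0.
have hz : h c0 = z0 by apply: val_inj.
set a0 : 'I_k.+1 := lift ord0 c0.
have a0n : (ord0 == a0) = false by rewrite /a0 (negbTE (neq_lift _ _)).
pose hx x := fun c => if c == c0 then x else h c.
have hxpos : forall x : 'I_(m.+1 + l), (0 < x)%N -> forall c, (0 < hx x c)%N.
  move=> x x0 c; rewrite /hx; case: eqP => // ne; rewrite lt0n; apply/eqP => e.
  by apply: ne; apply: hi; apply: val_inj; rewrite /= e hc0.
set u := xJ M q h.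
have uhx : forall x a z, upd u a0 (evec R x) a z = xJ M q (hx x) a z.
  move=> x a z; rewrite /upd; case: (unliftP ord0 a) => [c ->|->].
    rewrite /u !xJS /hx /a0 (inj_eq (@lift_inj _ ord0)).
    by case: eqP.
  by rewrite a0n /u !xJ0.
have E1 : forall z, u a0 z = 1 * xvec M ord0 z +
     \sum_(col < l) (- M ord0 col) * evec R (rshift m.+1 col) z.
  move=> z; rewrite /u /a0 xJS hz xvecE mul1r.
  rewrite -addrA -big_split /= big1 ?addr0 // => c _; lra.
have -> : wpair u W = wpair (upd u a0 (fun z => 1 * xvec M ord0 z +
     \sum_(col < l) (- M ord0 col) * evec R (rshift m.+1 col) z)) W.
  by apply: wpair_ext => a z; rewrite /upd; case: eqP => [->|//]; exact: E1.
rewrite wpair_upd_lin.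
have HY : forall col, `|wpair (upd u a0 (evec R (rshift m.+1 col))) W| <= Rc.
  move=> col; rewrite (wpair_ext (u' := xJ M q (hx (rshift m.+1 col)))).
    by apply: bound_pos; apply: hxpos.
  exact: uhx.
have HX : `|wpair (upd u a0 (xvec M ord0)) W| <= (1 + \sum_c `|M q c|) * Rc.
  case: (eqVneq q ord0) => [qe | qn0].
    rewrite (@wpair_alt _ _ _ _ ord0 a0) ?normr0 ?mulr_ge0 ?a0n //.
    - by apply: addr_ge0 => //; apply: sumr_ge0 => ? _; exact: normr_ge0.
    - by move=> z; rewrite /upd a0n eqxx /u xJ0 qe.
  set u' := upd u a0 (xvec M ord0).
  have -> : wpair u' W = wpair (upd u' ord0 (fun z => 1 * evec R (lshift l q) z +
       \sum_(col < l) M q col * evec R (rshift m.+1 col) z)) W.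
    apply: wpair_ext => a z; rewrite /upd; case: eqP => [->|//].
    by rewrite /u' /upd a0n /u xJ0 xvecE mul1r.
  rewrite wpair_upd_lin.
  have HP : forall x : 'I_(m.+1 + l), (0 < x)%N -> `|wpair (upd u' ord0 (evec R x)) W| <= Rc.
    move=> x x0.
    rewrite (wpair_ext (u' := fun a => xJ M ord0 (hx x) (tperm ord0 a0 a))).
      by rewrite wpair_perm; apply: bound_pos; apply: hxpos.
    move=> a z; rewrite /upd /u'.
    case: (eqVneq a ord0) => [->|an0]; first by rewrite tpermL /a0 xJS /hx eqxx.
    case: (eqVneq a a0) => [->|aa0]; first by rewrite tpermR xJ0 /upd eqxx.
    rewrite tpermD 1?eq_sym //; move: an0 aa0; case: (unliftP ord0 a) => [c ->|->];
      last by rewrite eqxx.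
    move=> _; rewrite /a0 (inj_eq (@lift_inj _ ord0)) => cc0.
    by rewrite /upd (inj_eq (@lift_inj _ ord0)) (negbTE cc0) /u !xJS /hx (negbTE cc0).
  apply: (le_trans (lin_bound _ _ (HP _ _) (fun t => HP _ _))).
  - rewrite lt0n; apply: contra qn0 => /eqP e; apply/eqP; apply: val_inj; exact: e.
  - by move=> t.
  by rewrite normr1 mulrDl mul1r.
apply: (le_trans (lin_bound _ _ HX HY)).
have H1 := rowsum_le M q; have H2 := rowsum_le M ord0.
have -> : \sum_(t < l) `|- M ord0 t| = \sum_c `|M ord0 c|.
  by apply: eq_bigr => t _; rewrite normrN.
rewrite normr1 mul1r /Cst.
have : (\sum_c `|M q c|) * Rc <= (\sum_i \sum_c `|M i c|) * Rc by apply: ler_wpM2r.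
have : (\sum_c `|M ord0 c|) * Rc <= (\sum_i \sum_c `|M i c|) * Rc by apply: ler_wpM2r.
nra.
Qed.

End Gen.


Section Gen2.
Variable R : realType.

Lemma sum_inj_le (I J : finType) (h : I -> J) (P : pred I) (Q : pred J) (F : J -> R) :
  injective h -> (forall i, P i -> Q (h i)) -> (forall j, 0 <= F j) ->
  \sum_(i | P i) F (h i) <= \sum_(j | Q j) F j.
Proof.
move=> hi PQ F0.
have -> : \sum_(i | P i) F (h i) = \sum_(i in [set i | P i]) F (h i).
  by apply: eq_bigl => i; rewrite inE.
rewrite -big_imset; last by move=> x y _ _; apply: hi.
rewrite (bigID (mem (h @: [set i | P i])) Q) /=.
have -> : \sum_(i | Q i && (i \in h @: [set i | P i])) F i =
          \sum_(i in h @: [set i | P i]) F i.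
  apply: eq_bigl => j; case: (boolP (j \in _)); rewrite ?andbT ?andbF //.
  by case/imsetP => i; rewrite inE => Pi ->; apply: PQ.
by rewrite lerDl; apply: sumr_ge0.
Qed.

Lemma pi_pos_row_free m l k (w : 'M[int]_(k.+1, m + l)) :
  0 < @pi_norm R m l k w -> row_free (map_mx (fun z : int => (z%:~R : R)) w).
Proof.
move=> pos.
set P := fun f : {ffun 'I_k.+1 -> 'I_(m + l)} => incr f && [forall a, (m <= f a)%N].
have [f Pf nz] : exists2 f, P f & wpair (fun a => evec R (f a)) (rvecs R w) != 0.
  case: (boolP [exists f, P f && (wpair (fun a => evec R (f a)) (rvecs R w) != 0)]).
    by case/existsP => f /andP [Pf nz]; exists f.
  move/existsPn => H; move: pos; rewrite /pi_norm big1 ?sqrtr0 ?ltxx // => f Pf.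
  by move: (H f); rewrite /P Pf /= negbK => /eqP ->; rewrite expr0n.
set W := map_mx (fun z : int => (z%:~R : R)) w.
have eqd : wpair (fun a => evec R (f a)) (rvecs R w) = \det (colsub f W).
  rewrite -det_tr /wpair; congr (\det _); apply/matrixP => a b.
  by rewrite !mxE dotv_evec /rvecs.
have Su : colsub f W \in unitmx by rewrite unitmxE unitfE -eqd.
have rk := mxrank_unit Su.
have eqc : colsub f W = W *m \matrix_(x, a) (x == f a)%:R.
  apply/matrixP => i a; rewrite !mxE (bigD1 (f a)) //= mxE eqxx mulr1.
  rewrite [in RHS]big1 ?addr0 /W ?mxE //.
  by move=> x /negbTE; rewrite mxE => ->; rewrite mulr0.
suff : (\rank W == k.+1)%N by [].
rewrite eqn_leq rank_leq_row /= -{1}rk eqc.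
exact: mxrankM_maxl.
Qed.

End Gen2.


Section Shift.
Variable R : realType.

Lemma xvec_lshift m l (M : 'M[R]_(m, l)) i j : xvec M i (lshift l j) = (j == i)%:R.
Proof. by rewrite /xvec; have := unsplitK (inl j : 'I_m + 'I_l); rewrite /= => ->. Qed.

Lemma xvec_rshift m l (M : 'M[R]_(m, l)) i c : xvec M i (rshift m c) = M i c.
Proof. by rewrite /xvec; have := unsplitK (inr c : 'I_m + 'I_l); rewrite /= => ->. Qed.

Lemma split_cases m l (x : 'I_(m + l)) :
  (exists j, x = lshift l j) \/ (exists c, x = rshift m c).
Proof.
case: (splitP x) => [j e | c e]; [left; exists j | right; exists c]; exact: val_inj.
Qed.

Lemma bump_ltn h x y : (bump h x < bump h y)%N = (x < y)%N.
Proof. by rewrite /bump; case: (leqP h x); case: (leqP h y) => /= *; lia. Qed.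


Section Model.
Variables (m l : nat) (A : 'M[R]_(m.+1, l)) (r : 'I_m.+1).

Definition R0 : 'I_(m.+1 + l) := lshift l r.
Definition lr (x : 'I_(m + l)) : 'I_(m.+1 + l) := lift R0 x.

Lemma lr_val x : val (lr x) = bump r x.
Proof. by []. Qed.

Lemma lr_inj : injective lr.
Proof. exact: lift_inj. Qed.

Lemma lr_col (c : 'I_l) : lr (rshift m c) = rshift m.+1 c.
Proof.
apply: val_inj; rewrite lr_val /= /bump.
by rewrite (leq_trans (_ : r <= m)%N (leq_addr _ _)) // -ltnS.
Qed.

Lemma lr_row (j : 'I_m) : lr (lshift l j) = lshift l (lift r j).
Proof. exact: val_inj. Qed.

Lemma R0_lr x : (R0 == lr x) = false.
Proof. exact: negbTE (neq_lift _ _). Qed.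

Lemma xvec_lr i x : xvec A (lift r i) (lr x) = xvec (row' r A) i x.
Proof.
case: (split_cases x) => [[j ->]|[c ->]].
  by rewrite lr_row !xvec_lshift (inj_eq (@lift_inj _ r)).
by rewrite lr_col !xvec_rshift mxE.
Qed.

Lemma xvec_R0 i : xvec A (lift r i) R0 = 0.
Proof. by rewrite /R0 xvec_lshift (negbTE (neq_lift _ _)). Qed.

Lemma evec_R0 y : evec R (lr y) R0 = 0.
Proof. by rewrite /evec R0_lr. Qed.

Lemma evec_lr y x : evec R (lr y) (lr x) = evec R y x.
Proof. by rewrite /evec (inj_eq lr_inj). Qed.

Lemma dotv_split (u v : 'I_(m.+1 + l) -> R) :
  dotv u v = u R0 * v R0 + dotv (fun x => u (lr x)) (fun x => v (lr x)).
Proof. by rewrite /dotv (bigD1_ord R0). Qed.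

Lemma reindex_pi j (d : 'I_(m + l)) (F : {ffun 'I_j -> 'I_(m.+1 + l)} -> R) :
  \sum_(f : {ffun 'I_j -> 'I_(m.+1 + l)} | incr f && [forall a, (m.+1 <= f a)%N]) F f =
  \sum_(f : {ffun 'I_j -> 'I_(m + l)} | incr f && [forall a, (m <= f a)%N])
     F [ffun a => lr (f a)].
Proof.
rewrite (reindex (fun f : {ffun 'I_j -> 'I_(m + l)} => [ffun a => lr (f a)])) /=.
  apply: eq_bigl => f; congr andb.
    apply: eq_forallb => x; apply: eq_forallb => y.
    by rewrite !ffunE !lr_val bump_ltn.
  apply: eq_forallb => a; rewrite ffunE lr_val /bump.
  have rm : (r <= m)%N by rewrite -ltnS.
  by case: leqP => ra; rewrite /=; lia.
exists (fun f : {ffun 'I_j -> 'I_(m.+1 + l)} => [ffun a => odflt d (unlift R0 (f a))]).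
  by move=> f _; apply/ffunP => a; rewrite !ffunE /lr liftK.
move=> f; rewrite inE => /andP [_ /forallP H]; apply/ffunP => a; rewrite !ffunE.
case: (unliftP R0 (f a)) => [x ->|e] //.
by move: (H a); rewrite e /= ltnNge -ltnS ltn_ord.
Qed.


Section Proj.
Variables (k : nat) (w : 'M[int]_(k.+1, m.+1 + l)).

Definition wproj : 'M[int]_(k.+1, m + l) := \matrix_(b, x) w b (lr x).

Lemma wpair_proj (u : 'I_k.+1 -> 'I_(m.+1 + l) -> R) u' :
  (forall a, u a R0 = 0) -> (forall a x, u a (lr x) = u' a x) ->
  wpair u (rvecs R w) = wpair u' (rvecs R wproj).
Proof.
move=> H0 H1; rewrite /wpair; congr (\det _); apply/matrixP => a b.
rewrite !mxE dotv_split H0 mul0r add0r /dotv; apply: eq_bigr => x _.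
by rewrite H1 /rvecs mxE.
Qed.

Lemma pi_proj (d : 'I_(m + l)) : @pi_norm R m l k wproj = @pi_norm R m.+1 l k w.
Proof.
rewrite /pi_norm (reindex_pi d); congr (Num.sqrt _); apply: eq_bigr => f _.
congr (_ ^+ 2); symmetry; apply: wpair_proj => [a|a x].
  by rewrite ffunE evec_R0.
by rewrite ffunE evec_lr.
Qed.

Lemma Rc_proj : Rc_norm (row' r A) wproj <= Rc_norm A w.
Proof.
rewrite /Rc_norm; apply: ler_wsqrtr.
rewrite [X in _ <= X](bigD1_ord r) //=.
apply: (@le_trans _ _ (\sum_(i < m) \sum_(g : {ffun 'I_k -> 'I_(m.+1 + l)} |
      incr g && [forall c, (0 < g c)%N]) wpair (xJ A (lift r i) g) (rvecs R w) ^+ 2)).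
  apply: ler_sum => i _.
  have e : forall g' : {ffun 'I_k -> 'I_(m + l)},
      wpair (xJ (row' r A) i g') (rvecs R wproj) =
      wpair (xJ A (lift r i) [ffun c => lr (g' c)]) (rvecs R w).
    move=> g'; symmetry; apply: wpair_proj => a.
      case: (unliftP ord0 a) => [c ->|->].
        by rewrite xJS ffunE evec_R0.
      by rewrite xJ0 xvec_R0.
    move=> x; case: (unliftP ord0 a) => [c ->|->].
      by rewrite !xJS ffunE evec_lr.
    by rewrite !xJ0 xvec_lr.
  under eq_bigr do rewrite e.
  apply: (sum_inj_le (h := fun g' : {ffun 'I_k -> 'I_(m + l)} => [ffun c => lr (g' c)])
     (F := fun g => wpair (xJ A (lift r i) g) (rvecs R w) ^+ 2)).
  - move=> g1 g2 /ffunP e12; apply/ffunP => c; move: (e12 c); rewrite !ffunE.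
    exact: lr_inj.
  - move=> g /andP [/forallP ig /forallP pg]; apply/andP; split.
      apply/forallP => x; apply/forallP => y; rewrite !ffunE !lr_val bump_ltn.
      exact: (forallP (ig x) y).
    apply/forallP => c; rewrite ffunE lr_val (leq_trans (pg c)) //.
    by rewrite /bump leq_addl.
  - by move=> g; apply: sqr_ge0.
rewrite lerDr; apply: sumr_ge0 => ? _; exact: sqr_ge0.
Qed.

End Proj.

Lemma adm_proj (d : 'I_(m + l)) k v :
  omega_adm k A v -> omega_adm k (row' r A) v.
Proof.
move=> Hv H; case: (Hv (Num.max H 0)) => w [_ Hpi Hrc].
have Hpi' : Num.max H 0 < @pi_norm R m l k (wproj w) by rewrite (pi_proj _ d).
exists (wproj w); split.
- apply: pi_pos_row_free; apply: le_lt_trans Hpi'; by rewrite le_max lexx orbT.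
- by apply: le_lt_trans Hpi'; by rewrite le_max lexx.
- by rewrite (pi_proj _ d); apply: le_lt_trans Hrc; exact: Rc_proj.
Qed.

Lemma omega_proj (d : 'I_(m + l)) j : (omega A j <= omega (row' r A) j)%E.
Proof.
apply: ereal_sup_le => x [v Hv <-]; exists v => //; exact: (adm_proj d).
Qed.

End Model.
End Shift.


Section Lift.
Variable R : realType.
Variables (m l : nat) (A : 'M[R]_(m.+2, l)) (r : 'I_m.+2) (D : int) (e : 'I_m.+1 -> int).
Hypothesis D0 : (0 < D)%R.
Hypothesis rel : forall c, (D%:~R : R) * A r c = \sum_q (e q)%:~R * row' r A q c.


Definition ec : 'I_(m.+1 + l) -> R :=
  fun x => \sum_q (e q)%:~R * evec R (lshift l q) x.

Definition Tt (u : 'I_(m.+2 + l) -> R) : 'I_(m.+1 + l) -> R :=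
  fun x => D%:~R * u (lr r x) + u (R0 l r) * ec x.

Definition Tw k (w : 'M[int]_(k.+1, m.+1 + l)) : 'M[int]_(k.+1, m.+2 + l) :=
  \matrix_(b, x) if unlift (R0 l r) x is Some x' then D * w b x'
                 else \sum_q e q * w b (lshift l q).

Lemma dotv_ec (v : 'I_(m.+1 + l) -> R) : dotv ec v = \sum_q (e q)%:~R * v (lshift l q).
Proof.
rewrite /dotv /ec; under eq_bigr do rewrite mulr_suml.
rewrite exchange_big /=; apply: eq_bigr => q _.
by under eq_bigr do rewrite -mulrA; rewrite -mulr_sumr -/(dotv _ _) dotv_evec.
Qed.

Lemma wpair_T k (u : 'I_k.+1 -> 'I_(m.+2 + l) -> R) w :
  wpair u (rvecs R (Tw w)) = wpair (fun a => Tt (u a)) (rvecs R w).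
Proof.
rewrite /wpair; congr (\det _); apply/matrixP => a b; rewrite !mxE.
rewrite (dotv_split r) /rvecs mxE /Tt unlift_none.
rewrite /dotv; under [X in _ = X]eq_bigr do rewrite mulrDl.
rewrite big_split /= [in RHS]addrC; congr (_ + _); last first.
  apply: eq_bigr => x _; rewrite mxE /lr liftK intrM /lr; lra.
transitivity (u a (R0 l r) * dotv ec (fun i => (w b i)%:~R)); last first.
  by rewrite /dotv mulr_sumr; apply: eq_bigr => i _; rewrite mulrA.
rewrite dotv_ec rmorph_sum; congr (_ * _); apply: eq_bigr => q _; exact: intrM.
Qed.


Lemma Tt_evec_lr y x : Tt (evec R (lr r y)) x = D%:~R * evec R y x.
Proof. by rewrite /Tt evec_lr evec_R0 mul0r addr0. Qed.

Lemma Tt_evec_R0 x : Tt (evec R (R0 l r)) x = ec x.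
Proof. by rewrite /Tt /evec eqxx mul1r eq_sym R0_lr mulr0 add0r. Qed.

Lemma Tt_xvec_lift i x : Tt (xvec A (lift r i)) x = D%:~R * xvec (row' r A) i x.
Proof. by rewrite /Tt xvec_lr xvec_R0 mul0r addr0. Qed.

Lemma Tt_xvec_r x : Tt (xvec A r) x = \sum_q (e q)%:~R * xvec (row' r A) q x.
Proof.
rewrite /Tt /R0 xvec_lshift eqxx mul1r.
case: (split_cases x) => [[j ->]|[c ->]].
  rewrite lr_row xvec_lshift eq_sym (negbTE (neq_lift _ _)) mulr0 add0r /ec.
  by apply: eq_bigr => q _; rewrite xvec_lshift.
rewrite lr_col xvec_rshift /ec big1 ?addr0; last first.
  move=> q _; rewrite /evec ordE /=.
  have -> : ((m.+1 + c)%N == q) = false by apply/negbTE; rewrite neq_ltn (leq_trans (ltn_ord q) (leq_addr _ _)) orbT.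
  by rewrite mulr0.

by rewrite rel; apply: eq_bigr => q _; rewrite xvec_rshift.
Qed.

Definition Mc : R := D%:~R + \sum_q `|(e q)%:~R : R|.

Lemma Mc_ge : (D%:~R : R) <= Mc.
Proof. by rewrite /Mc lerDl; apply: sumr_ge0 => q _; exact: normr_ge0. Qed.

Lemma D_ge0 : 0 <= (D%:~R : R).
Proof. by rewrite ler0z ltW. Qed.

Lemma bound_T k (w : 'M[int]_(k.+1, m.+1 + l)) i (g : 'I_k -> 'I_(m.+2 + l)) :
  `|wpair (xJ A i g) (rvecs R (Tw w))| <=
     Cst (row' r A) * Rc_norm (row' r A) w * Mc ^+ k.+1.
Proof.
rewrite wpair_T.
pose G := fun (a : 'I_k.+1) (v : 'I_(m.+1 + l) -> R) =>
  if a == ord0 then exists q, v = xvec (row' r A) q else exists y, v = evec R y.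
apply: (span_bound (G := G)).
- apply: mulr_ge0; last exact: sqrtr_ge0.
  rewrite /Cst; apply: addr_ge0 => //; apply: mulr_ge0 => //.
  by apply: sumr_ge0 => ? _; apply: sumr_ge0 => ? _; exact: normr_ge0.
- move=> u Hu.
  have [q eq0] : exists q, u ord0 = xvec (row' r A) q by move: (Hu ord0); rewrite /G eqxx.
  have : forall c : 'I_k, exists y, u (lift ord0 c) = evec R y.
    by move=> c; move: (Hu (lift ord0 c)); rewrite /G eq_sym (negbTE (neq_lift _ _)).
  case/fin_all_exists => h Hh.
  rewrite (wpair_ext (u' := xJ (row' r A) q h)); first exact: bound_all.
  by move=> a x; case: (unliftP ord0 a) => [c ->|->]; rewrite ?xJS ?xJ0 ?Hh ?eq0.
- move=> a; rewrite /rep /G; case: (unliftP ord0 a) => [c ->|->].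
    rewrite eq_sym (negbTE (neq_lift _ _)) xJS.
    case: (unliftP (R0 l r) (g c)) => [y e1|e1].
      exists 0%N, D%:~R, (evec R y), (fun t : 'I_0 => 0), (fun _ => evec R y).
      split.
      + by move=> z; rewrite e1 -/(lr r y) Tt_evec_lr big_ord0 addr0.
      + by exists y.
      + by move=> t; exists y.
      + by rewrite big_ord0 addr0 ger0_norm ?D_ge0 // Mc_ge.
    exists m.+1, 0, (evec R (lshift l (ord0 : 'I_m.+1))), (fun q => (e q)%:~R : R),
      (fun q => evec R (lshift l q)).
    split.
    + by move=> z; rewrite e1 Tt_evec_R0 mul0r add0r.
    + by exists (lshift l (ord0 : 'I_m.+1)).
    + by move=> t; exists (lshift l t).
    + by rewrite normr0 add0r /Mc lerDr D_ge0.
  rewrite eqxx xJ0; case: (unliftP r i) => [i' ->|->].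
    exists 0%N, D%:~R, (xvec (row' r A) i'), (fun t : 'I_0 => 0),
      (fun _ => xvec (row' r A) i').
    split.
    + by move=> z; rewrite Tt_xvec_lift big_ord0 addr0.
    + by exists i'.
    + by move=> t; exists i'.
    + by rewrite big_ord0 addr0 ger0_norm ?D_ge0 // Mc_ge.
  exists m.+1, 0, (xvec (row' r A) ord0), (fun q => (e q)%:~R : R),
    (fun q => xvec (row' r A) q).
  split.
  + by move=> z; rewrite Tt_xvec_r mul0r add0r.
  + by exists ord0.
  + by move=> t; exists t.
  + by rewrite normr0 add0r /Mc lerDr D_ge0.
Qed.


Lemma wpair_scale j p (u : 'I_j -> 'I_p -> R) W (c : R) :
  wpair (fun a x => c * u a x) W = c ^+ j * wpair u W.
Proof.
rewrite /wpair -detZ; congr (\det _); apply/matrixP => a b; rewrite !mxE /dotv.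
by rewrite mulr_sumr; apply: eq_bigr => x _; rewrite mulrA.
Qed.

Lemma pi_T k (w : 'M[int]_(k.+1, m.+1 + l)) :
  @pi_norm R m.+2 l k (Tw w) = (D%:~R : R) ^+ k.+1 * @pi_norm R m.+1 l k w.
Proof.
rewrite /pi_norm (reindex_pi r (lshift l (ord0 : 'I_m.+1))).
have H : forall f : {ffun 'I_k.+1 -> 'I_(m.+1 + l)},
   wpair (fun a => evec R ([ffun a => lr r (f a)] a)) (rvecs R (Tw w)) =
   (D%:~R : R) ^+ k.+1 * wpair (fun a => evec R (f a)) (rvecs R w).
  move=> f; rewrite wpair_T -wpair_scale; apply: wpair_ext => a x.
  by rewrite ffunE Tt_evec_lr.
under eq_bigr do rewrite H exprMn.
rewrite -mulr_sumr sqrtrM ?sqrtr_sqr ?ger0_norm //.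
  by apply: exprn_ge0; exact: D_ge0.
by apply: exprn_ge0; apply: exprn_ge0; exact: D_ge0.
Qed.

Definition N0 k : R := \sum_(i < m.+2) \sum_(g : {ffun 'I_k -> 'I_(m.+2 + l)} |
   incr g && [forall c, (0 < g c)%N]) 1.

Lemma Rc_T k (w : 'M[int]_(k.+1, m.+1 + l)) :
  Rc_norm A (Tw w) <=
  Num.sqrt (N0 k) * (Cst (row' r A) * Mc ^+ k.+1) * Rc_norm (row' r A) w.
Proof.
set B := Cst (row' r A) * Rc_norm (row' r A) w * Mc ^+ k.+1.
have B0 : 0 <= B.
  apply: mulr_ge0; last by apply: exprn_ge0; apply: le_trans Mc_ge; exact: D_ge0.
  apply: mulr_ge0; last exact: sqrtr_ge0.
  rewrite /Cst; apply: addr_ge0 => //; apply: mulr_ge0 => //.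
  by apply: sumr_ge0 => ? _; apply: sumr_ge0 => ? _; exact: normr_ge0.
have N00 : 0 <= N0 k by apply: sumr_ge0 => ? _; apply: sumr_ge0.
have H : Rc_norm A (Tw w) <= Num.sqrt (N0 k * B ^+ 2).
  rewrite /Rc_norm; apply: ler_wsqrtr; rewrite /N0 mulr_suml; apply: ler_sum => i _.
  rewrite mulr_suml; apply: ler_sum => g _; rewrite mul1r.
  rewrite -(real_normK (num_real _)) !expr2; apply: ler_pM => //; exact: bound_T.
apply: (le_trans H); rewrite sqrtrM // sqrtr_sqr ger0_norm // /B.
by rewrite le_eqVlt; apply/orP; left; apply/eqP; ring.
Qed.


Lemma adm_lift k v v2 : v2 < v -> omega_adm k (row' r A) v -> omega_adm k A v2.
Proof.
move=> lt Hv H.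
have j0 : (0 : R) < k.+1%:R by rewrite ltr0n.
set e1 := (v + 1 - k.+1%:R) / k.+1%:R.
set e2 := (v2 + 1 - k.+1%:R) / k.+1%:R.
have de : 0 < e1 - e2.
  rewrite /e1 /e2 -mulrBl; apply: divr_gt0 => //; lra.
set Kc := Num.sqrt (N0 k) * (Cst (row' r A) * Mc ^+ k.+1).
have Kc0 : 0 <= Kc.
  apply: mulr_ge0; first exact: sqrtr_ge0.
  apply: mulr_ge0; last by apply: exprn_ge0; apply: le_trans Mc_ge; exact: D_ge0.
  rewrite /Cst; apply: addr_ge0 => //; apply: mulr_ge0 => //.
  by apply: sumr_ge0 => ? _; apply: sumr_ge0 => ? _; exact: normr_ge0.
set K1 := Kc + 1.
have K10 : 0 < K1 by rewrite /K1; lra.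
set Dk := (D%:~R : R) ^+ k.+1.
have Dk1 : 1 <= Dk by apply: exprn_ege1; rewrite ler1z -gtz0_ge1.
have Dk0 : 0 < Dk by lra.
set Q := K1 * Dk `^ e2.
have Q0 : 0 <= Q by apply: mulr_ge0; [lra | exact: powR_ge0].
set H' := Num.max H (Num.max 1 (Q `^ (1 / (e1 - e2)))).
case: (Hv H') => w' [_ Hpi' Hrc'].
set p := @pi_norm R m.+1 l k w' in Hpi' Hrc'.
have H'1 : 1 <= H' by rewrite /H' !le_max lexx orbT.
have HH' : H <= H' by rewrite /H' le_max lexx.
have QH' : Q `^ (1 / (e1 - e2)) <= H' by rewrite /H' !le_max lexx !orbT.
have p0 : 0 < p by lra.
exists (Tw w'); split.
- by apply: pi_pos_row_free; rewrite pi_T; apply: mulr_gt0.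
- rewrite pi_T -/Dk; apply: (le_lt_trans HH'); apply: (lt_le_trans Hpi').
  by apply: ler_peMl => //; lra.
rewrite pi_T -/Dk -/p.
have Rc0 : 0 <= Rc_norm (row' r A) w' by exact: sqrtr_ge0.
apply: (le_lt_trans (Rc_T w')); rewrite -/Kc.
have step1 : Kc * Rc_norm (row' r A) w' <= K1 * Rc_norm (row' r A) w'.
  by apply: ler_wpM2r => //; rewrite /K1; lra.
apply: (le_lt_trans step1); apply: (lt_le_trans (_ : _ < K1 * p `^ (- e1))).
  by rewrite ltr_pM2l.
have pQ : Q <= p `^ (e1 - e2).
  have -> : Q = (Q `^ (1 / (e1 - e2))) `^ (e1 - e2).
    rewrite -powRrM mul1r mulVf ?powRr1 //; lra.
  apply: (le_trans (y := H' `^ (e1 - e2))).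
    apply: ge0_ler_powR => //; [lra | rewrite nnegrE; exact: powR_ge0 | rewrite nnegrE; lra].
  apply: ge0_ler_powR => //; [lra | rewrite nnegrE; lra | rewrite nnegrE; lra | lra].
rewrite powRM; [|lra|lra].
have -> : p `^ (- e2) = p `^ (e1 - e2) * p `^ (- e1).
  rewrite -powRD; first by congr (_ `^ _); lra.
  by apply/implyP => _; rewrite gt_eqF.
have Dkinv : Dk `^ (- e2) * Dk `^ e2 = 1 by rewrite powRN mulVf // gt_eqF // powR_gt0.
have pe : 0 <= p `^ (- e1) by exact: powR_ge0.
have Dke : 0 <= Dk `^ (- e2) by exact: powR_ge0.
apply: (le_trans (y := Dk `^ (- e2) * (Q * p `^ (- e1)))).
  rewrite /Q; have -> : Dk `^ (- e2) * (K1 * Dk `^ e2 * p `^ (- e1)) = (Dk `^ (- e2) * Dk `^ e2) * (K1 * p `^ (- e1)) by ring.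
  by rewrite Dkinv mul1r.

by apply: ler_wpM2l => //; apply: ler_wpM2r.
Qed.

End Lift.

Lemma le_from_below (R : realType) (v : R) (y : \bar R) :
  (forall v2, v2 < v -> (v2%:E <= y)%E) -> (v%:E <= y)%E.
Proof.
case: y => [y||] H.
- rewrite lee_fin leNgt; apply/negP => yv.
  by have := H ((y + v) / 2) ltac:(lra); rewrite lee_fin; lra.
- exact: leey.
- by have := H (v - 1) ltac:(lra).
Qed.

Lemma omega_lift (R : realType) m l (A : 'M[R]_(m.+2, l)) r (D : int) (e : 'I_m.+1 -> int) :
  0 < D -> (forall c, (D%:~R : R) * A r c = \sum_q (e q)%:~R * row' r A q c) ->
  forall j, (omega (row' r A) j <= omega A j)%E.
Proof.
move=> D0 rel j; apply: ge_ereal_sup => x [v Hv <-].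
apply: le_from_below => v2 lt; apply: ereal_sup_ubound.
by exists v2 => //; exact: (adm_lift D0 rel lt Hv).
Qed.

Lemma common_den (R : realType) s (c : 'I_s -> rat) :
  exists D : int, 0 < D /\
    exists e : 'I_s -> int, forall q, ((e q)%:~R : R) = D%:~R * ratr (c q).
Proof.
exists (\prod_q denq (c q)); split; first by apply: prodr_gt0 => q _; exact: denq_gt0.
exists (fun q => numq (c q) * \prod_(q' | q' != q) denq (c q')) => q.
have hn : ((numq (c q))%:~R : R) = ratr (c q) * (denq (c q))%:~R.
  by rewrite -[(denq _)%:~R](ratr_int R) -rmorphM /= -numqE ratr_int.
rewrite [in RHS](bigD1 q) //= !rmorphM /= hn; ring.
Qed.

Unset Implicit Arguments.

Theorem lemma5p7 (R : realType) (s n : nat) (A : 'M[R]_(s.+1, n - s))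
    (r : 'I_s.+1) :
  (1 <= s)%N -> (s < n)%N ->
  (forall j : nat, (1 <= j <= n - s)%N ->
     (omega A j <= omega (row' r A) j)%E) /\
  ((exists c : 'I_s -> rat,
      row r A = \sum_(k < s) ratr (c k) *: row k (row' r A)) ->
   forall j : nat, (1 <= j <= n - s)%N ->
     omega (row' r A) j = omega A j).
Proof.
case: s A r => [|s] A r // _ _.
split.
  by move=> j _; exact: (omega_proj A r (lshift (n - s.+1) (ord0 : 'I_s.+1)) j).
case=> c hc j _.
case: (common_den R c) => D [D0 [e he]].
apply/le_anti/andP; split; last first.
  exact: (omega_proj A r (lshift (n - s.+1) (ord0 : 'I_s.+1)) j).
apply: (omega_lift (D := D) (e := e)) => // col.
have h := congr1 (fun M : 'M[R]_(1, n - s.+1) => M 0 col) hc; move: h; rewrite /= !mxE summxE => h.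
rewrite h mulr_sumr; apply: eq_bigr => q _; rewrite !mxE he; ring.
Qed.
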